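(* Fix $m\ge1$, a partition $\xi$ with all parts $\le m$, $\mu\in\mathbb Z_{\ge0}$, $\mu=\mu_1m+\mu_0$ ($0\le\mu_0<m$), $t=\#\{i:\xi_i=m\}$, and assume $k:=\mu_1+1-t\ge0$. Let $\alpha_0=m-\mu_0-1$ and $\alpha_1,\dots,\alpha_L$ the parts of $\xi$ smaller than $m$ (with multiplicity), so $F_{\xi,m,\mu}(x)=\frac{p_{m-\mu_0-1}(x)p_\xi(x)}{p_m(x)^{\mu_1+1}}=\prod_{i=0}^Lp_{\alpha_i}(x)/p_m(x)^k=\sum_{r\ge0}a_rx^r$. Suppose there exist integers $(a_\nu,b_\nu)$, $1\le\nu\le k$, with $0\le a_\nu,b_\nu\le m-1$ and $a_\nu+b_\nu\le m-1$, such that $\prod_{i=0}^Lp_{\alpha_i}(x)=\prod_{\nu=1}^kp_{a_\nu}(x)p_{b_\nu}(x)$. Then \[ F_{\xi,m,\mu}(x)=\prod_{\nu=1}^k\Big(\sum_{u\ge0}D_m(a_\nu,b_\nu;u)x^u\Big), \] so $a_r$ equals the number of $k$-tuples $(P_1,\dots,P_k)$ with $P_\nu\in\mathcal D_m(a_\nu,b_\nu;u_\nu)$ for some $u_\nu\ge0$ and $u_1+\cdots+u_k=r$; in particular all $a_r\ge0$. Moreover, in each of the following families take $\mu=|\xi|$ (and $s,t\ge 0$ integers; a notation $m^t$ denotes $t$ parts equal to $m$, parts arranged in nonincreasing order): (a) $\xi=(m^t,1^s)$, $s=qm+\rho$ with $q\ge0$, $0\le\rho<m$. For every $N\ge0$,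 $a_N$ equals the number of tuples $(P_0,\dots,P_q)$ with $P_0\in\mathcal D_m(0,m-\rho-1;u_0)$, $P_\nu\in\mathcal D_m(0,0;u_\nu)$ for $1\le\nu\le q$, and $u_0+\cdots+u_q=N$. (b) $\xi=(m^t,r,1^s)$ with $1\le r\le m-1$, $r+s=qm+\rho$, $q\ge0$, $0\le\rho<m$. If $q=0$, then for every $u\ge0$, $a_u=D_m(r,m-r-s-1;u)$, i.e. the number of Dyck paths of height at most $m-1$ and semilength $r+s+u$ whose first $r$ steps are up-steps and whose last $r+s$ steps are down-steps. If $q\ge1$, then for every $N\ge0$, $a_N$ equals the number of tuples $(P_0,\dots,P_q)$ with $P_0\in\mathcal D_m(0,m-\rho-1;u_0)$, $P_1\in\mathcal D_m(r,0;u_1)$, $P_\nu\in\mathcal D_m(0,0;u_\nu)$ for $2\le\nu\le q$, and $u_0+\cdots+u_q=N$. (c) $\xi=(m^t,r_1,\dots,r_d,1^s)$ with $1\le r_i\le m-1$, $r_1+\cdots+r_d+s=qm+\rho$, $q\ge0$, $0\le\rho<m$. If $q\ge d$, then for every $N\ge0$, $a_N$ equals the number of tuples $(P_0,\dots,P_q)$ with $P_0\in\mathcal D_m(0,m-\rho-1;u_0)$, $P_i\in\mathcal D_m(r_i,0;u_i)$ for $1\le i\le d$, $P_\nu\in\mathcal D_m(0,0;u_\nu)$ for $d+1\le\nu\le q$, and $u_0+\cdots+u_q=N$.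
   Context: $p_0=p_1=1$, $p_{r+1}(x)=p_r(x)-xp_{r-1}(x)$ ($r\ge1$); $p_\xi=\prod_ip_{\xi_i}$; $|\xi|$ is the sum of the parts. A Dyck path is a lattice path from $(0,0)$ with steps $U=(1,1)$, $D=(1,-1)$, ending on the $x$-axis and never going below it; its semilength is half its number of steps and its height is the maximal $y$-coordinate reached. For $m\ge1$, $0\le a,b\le m-1$ with $a+b\le m-1$, and $u\ge0$, $\mathcal D_m(a,b;u)$ is the set of Dyck paths of height at most $m-1$ and semilength $m-1-b+u$ whose first $a$ steps are up-steps and whose last $m-1-b$ steps are down-steps; $D_m(a,b;u):=\#\mathcal D_m(a,b;u)$. *)

(* Defs.v *)
From mathcomp Require Import all_boot all_order all_algebra.
Set Implicit Arguments. Unset Strict Implicit. Unset Printing Implicit Defensive.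
Import GRing.Theory.
Local Open Scope ring_scope.

Fixpoint pr (n : nat) : {poly int} :=
  match n with
  | 0 => 1
  | n1.+1 => match n1 with
             | 0 => 1
             | n2.+1 => pr n1 - 'X * pr n2
             end
  end.

Definition pxi (xi : seq nat) : {poly int} := \prod_(x <- xi) pr x.

(* r-th coefficient of the formal power series expansion of P/Q, for Q with
   constant coefficient 1: 1/Q = sum_j (1-Q)^j, and (1-Q)^j = O(x^j), so
   only j <= r contributes to the coefficient of x^r. *)
Definition series_coef (P Q : {poly int}) (r : nat) : int :=
  (P * \sum_(j < r.+1) (1 - Q) ^+ j)`_r.

Definition Fcoef (m : nat) (xi : seq nat) (mu : nat) (r : nat) : int :=
  series_coef (pr (m - mu %% m - 1) * pxi xi) (pr m ^+ (mu %/ m).+1) r.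

Local Open Scope nat_scope.

Definition partition_le (m : nat) (xi : seq nat) : bool :=
  [&& all (fun x => 0 < x) xi, all (fun x => x <= m) xi & sorted geq xi].


(* Lattice paths as step sequences: true = U = (1,1), false = D = (1,-1). *)
Fixpoint walk_ok (h : nat) (s : seq bool) : bool :=
  match s with
  | [::] => h == 0
  | true :: s' => walk_ok h.+1 s'
  | false :: s' => (0 < h) && walk_ok h.-1 s'
  end.

Fixpoint walk_max (h : nat) (s : seq bool) : nat :=
  match s with
  | [::] => h
  | b :: s' => maxn h (walk_max (if b then h.+1 else h.-1) s')
  end.

Definition is_dyck (s : seq bool) : bool := walk_ok 0 s.
Definition height (s : seq bool) : nat := walk_max 0 s.

(* membership in D_m(a,b;u), for a path s of size 2*(m-1-b+u) *)
Definition in_Dm (m a b : nat) (s : seq bool) : bool :=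
  [&& is_dyck s, height s <= m - 1,
      take a s == nseq a true &
      drop (size s - (m - 1 - b)) s == nseq (m - 1 - b) false].

Definition Dm (m a b u : nat) : nat :=
  #|[pred t : ((m - 1 - b + u).*2).-tuple bool | in_Dm m a b t]|.

Definition tuple_count (m : nat) (ab : seq (nat * nat)) (r : nat) : nat :=
  \sum_(u : {ffun 'I_(size ab) -> 'I_r.+1} | \sum_(i < size ab) (u i : nat) == r)
    \prod_(i < size ab) Dm m (nth (0, 0) ab i).1 (nth (0, 0) ab i).2 (u i).

(* Main.v *)
Require Import Defs.
From mathcomp Require Import all_boot all_order all_algebra.
Import GRing.Theory.
Local Open Scope ring_scope.
From mathcomp Require Import ring zify.

Definition qr (n : nat) : {poly int} := if n is n'.+1 then pr n' else 0.

Lemma prS n : pr n.+1 = pr n - 'X * qr n.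
Proof. by case: n => [|n] //=; rewrite mulr0 subr0. Qed.

Lemma prJ c e : pr (c + e) = pr c * pr e - 'X * (qr c * qr e).
Proof.
elim: c {-2}c (leqnn c) e => [|n IH] c hc e.
  by move: hc; rewrite leqn0 => /eqP ->; rewrite /= add0n mul1r mul0r mulr0 subr0.
case: c hc => [|[|c]] hc.
- by rewrite /= add0n mul1r mul0r mulr0 subr0.
- by rewrite add1n prS /= !mul1r.
- have E1 := IH c.+1 hc e.
  have E2 := IH c (leq_trans (leqnSn _) hc) e.
  rewrite (_ : pr (c.+2 + e) = pr (c.+1 + e) - 'X * pr (c + e)); last by rewrite !addSn.
  rewrite E1 E2 (_ : pr c.+2 = pr c.+1 - 'X * pr c) //.
  rewrite (_ : qr c.+1 = pr c) // (_ : qr c.+2 = pr c.+1) // (prS c). ring.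
Qed.

Lemma prI c e : pr c * pr e = pr (c + e).+1 + 'X * (pr c * qr e) + 'X * (qr c * pr e).
Proof. rewrite -addSn prJ prS /=. ring. Qed.

Lemma pr_coef0 n : (pr n)`_0 = 1.
Proof.
elim: n {-2}n (leqnn n) => [|k IH] n hn.
  by move: hn; rewrite leqn0 => /eqP ->; rewrite coefC.
case: n hn => [|[|n]] hn; try by rewrite /= coefC.
rewrite (_ : pr n.+2 = pr n.+1 - 'X * pr n) // coefB coefXM eqxx subr0; apply: IH; lia.
Qed.

Definition Fh (H c h : nat) : {poly int} :=
  'X^(h - c) * (pr (minn h c) * pr (H - maxn h c)).

Lemma Fh_rec H c h : (c <= H)%N -> (h <= H)%N ->
  Fh H c h = (if h == c then pr H.+1 else 0)
             + (if (h < H)%N then Fh H c h.+1 else 0)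
             + 'X * (if h is h'.+1 then Fh H c h' else 0).
Proof.
move=> cH hH; rewrite /Fh.
case: (ltngtP h c) => hc.
- have -> : (h - c = 0)%N by lia.
  have -> : minn h.+1 c = h.+1 by lia. have -> : maxn h.+1 c = c by lia.
  have -> : (h.+1 - c = 0)%N by lia.
  have -> : (h < H)%N by lia.
  rewrite prS add0r !mul1r.
  case: h hc {hH} => [|h] hc.
    rewrite mulr0 /=; ring.
  have -> : minn h c = h by lia. have -> : maxn h c = c by lia.
  have -> : (h - c = 0)%N by lia.
  rewrite /= mul1r. ring.
-
  case: h hc hH => [|h] hc hH; first by lia.
  have -> : minn h c = c by lia. have -> : maxn h c = h by lia.
  have -> : (h.+1 - c = (h - c).+1)%N by lia.
  case: (ltnP h.+1 H) => hH'.
  + have -> : minn h.+2 c = c by lia. have -> : maxn h.+2 c = h.+2 by lia.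
    have -> : (h.+2 - c = (h - c).+2)%N by lia.
    have -> : (H - h.+1 = (H - h.+2).+1)%N by lia.
    have -> : (H - h = (H - h.+2).+2)%N by lia.
    rewrite !exprS add0r.
    rewrite (_ : pr (H - h.+2).+2 = pr (H - h.+2).+1 - 'X * pr (H - h.+2)) //.
    ring.
  + have -> : (H = h.+1) by lia.
    rewrite subnn (_ : (h.+1 - h = 1)%N); last by lia.
    rewrite exprS /=. ring.
-
  subst c. rename h into c. rename hH into cH0. rewrite ?minnn ?maxnn subnn ?eqxx.
  case: (ltnP c H) => cH'.
  + have -> : minn c.+1 c = c by lia. have -> : maxn c.+1 c = c.+1 by lia.
    have -> : (c.+1 - c = 1)%N by lia.
    case: c cH cH0 cH' => [|c] cH cH0 cH'.
    * case: H {cH cH0} cH' => // H' _.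
      rewrite subn0 subn1 (_ : pr H'.+2 = pr H'.+1 - 'X * pr H') //.
      rewrite (_ : pr 0 = 1) // (_ : H'.+1.-1 = H') //. ring.
    * have -> : minn c c.+1 = c by lia. have -> : maxn c c.+1 = c.+1 by lia.
      have -> : (c - c.+1 = 0)%N by lia.
      have E := prI c.+1 (H - c.+1).
      move: E.
      have -> : (c.+1 + (H - c.+1)).+1 = H.+1 by lia.
      have -> : qr (H - c.+1) = pr (H - c.+2).
        rewrite /qr. have -> : (H - c.+1 = (H - c.+2).+1)%N by lia. by [].
      move=> E. rewrite expr0 expr1 !mul1r E /qr. ring.
  + have -> : H = c by lia.
    rewrite subnn /=.
    case: c {cH cH0 cH'} => [|c].
      by rewrite /= !mul1r mulr0 !addr0.
    have -> : minn c c.+1 = c by lia. have -> : maxn c c.+1 = c.+1 by lia.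
    have -> : (c - c.+1 = 0)%N by lia.
    rewrite subnn expr0 (_ : pr 0 = 1) //. ring.
Qed.

Lemma Fh_rec' H c h : (c <= H)%N -> (h <= H)%N ->
  Fh H c h = (if h == c then pr H.+1 else 0)
             + (if (h < H)%N then Fh H c h.+1 else 0)
             + (if (0 < h)%N then 'X * Fh H c h.-1 else 0).
Proof. by move=> cH hH; rewrite Fh_rec //; case: h {hH} => [|h]; rewrite ?mulr0. Qed.

Local Close Scope ring_scope.

Lemma tup_list n (P : pred (seq bool)) : exists L : seq (seq bool),
  [/\ uniq L, (forall s, (s \in L) = (size s == n) && P s) &
      #|[pred t : n.-tuple bool | P t]| = size L].
Proof.
exists [seq val t | t <- enum [pred t : n.-tuple bool | P t]]; split.
- rewrite map_inj_uniq ?enum_uniq //; exact: val_inj.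
- move=> s; apply/mapP/andP.
  + by case=> t; rewrite mem_enum /= => Pt ->; rewrite size_tuple eqxx.
  + case=> sz Ps; exists (Tuple sz) => //; by rewrite mem_enum.
- by rewrite size_map cardE.
Qed.

Lemma card_list n (P : pred (seq bool)) L : uniq L ->
  (forall s, (s \in L) = (size s == n) && P s) ->
  #|[pred t : n.-tuple bool | P t]| = size L.
Proof.
move=> uL mL; have [L' [uL' mL' ->]] := tup_list n P.
by apply/perm_size/uniq_perm => // s; rewrite mL' mL.
Qed.

Lemma card_bij n n' (P Q : pred (seq bool)) (f g : seq bool -> seq bool) :
  (forall s, size s = n -> P s -> [/\ size (f s) = n', Q (f s) & g (f s) = s]) ->
  (forall s, size s = n' -> Q s -> [/\ size (g s) = n, P (g s) & f (g s) = s]) ->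
  #|[pred t : n.-tuple bool | P t]| = #|[pred t : n'.-tuple bool | Q t]|.
Proof.
move=> hf hg; have [L [uL mL ->]] := tup_list n P.
rewrite (@card_list _ _ (map f L)) ?size_map //.
- rewrite map_inj_in_uniq // => x y; rewrite !mL => /andP [/eqP sx Px] /andP [/eqP sy Py] e.
  by have [_ _ <-] := hf x sx Px; have [_ _ <-] := hf y sy Py; rewrite e.
- move=> s; apply/mapP/andP.
  + case=> x; rewrite mL => /andP [/eqP sx Px] ->.
    by have [-> Qf _] := hf x sx Px.
  + case=> /eqP ss Qs; have [sg Pg fg] := hg s ss Qs.
    by exists (g s); rewrite // mL sg eqxx.
Qed.

Lemma card_tupleS n (P : pred (seq bool)) :
  #|[pred t : n.+1.-tuple bool | P t]| =
  (#|[pred t : n.-tuple bool | P (true :: t)]| +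
   #|[pred t : n.-tuple bool | P (false :: t)]|)%N.
Proof.
have [L1 [u1 m1 ->]] := tup_list n (fun s => P (true :: s)).
have [L2 [u2 m2 ->]] := tup_list n (fun s => P (false :: s)).
rewrite (@card_list _ _ (map (cons true) L1 ++ map (cons false) L2)).
- by rewrite size_cat !size_map.
- rewrite cat_uniq !map_inj_uniq //; try by move=> x y [].
  rewrite u1 u2 andbT /=; apply/hasP => -[s /mapP [s1 _ ->] /mapP [s2 _]] //.
- case=> [|b s]; rewrite mem_cat.
    by apply/negP => /orP [] /mapP [].
  case: b => /=.
  + rewrite mem_map; last by move=> x y [].
    have -> : (true :: s \in map (cons false) L2) = false by apply/negP => /mapP [].
    by rewrite orbF m1.
  + rewrite mem_map; last by move=> x y [].
    have -> : (false :: s \in map (cons true) L1) = false by apply/negP => /mapP [].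
    by rewrite m2.
Qed.

Fixpoint wk (H c h : nat) (s : seq bool) : bool :=
  match s with
  | [::] => h == c
  | b :: s' => if b then (h < H) && wk H c h.+1 s' else (0 < h) && wk H c h.-1 s'
  end.

Lemma walk_maxge h s : h <= walk_max h s.
Proof. by case: s => [|b s] //=; rewrite leq_maxl. Qed.

Lemma wk_dyck H h s : h <= H -> (walk_ok h s && (walk_max h s <= H)) = wk H 0 h s.
Proof.
elim: s h => [|b s IH] h hH /=; first by rewrite hH andbT.
rewrite geq_max hH /=; case: b.
- case: (ltnP h H) => hH' /=; first by rewrite IH.
  have -> : (walk_max h.+1 s <= H) = false.
    apply/negbTE; rewrite -ltnNge; apply: leq_trans (walk_maxge _ _); lia.
  by rewrite andbF.
- case: h hH => [|h] hH //=.
  exact: IH (ltnW hH).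
Qed.

Lemma wk_ups H c h k w : h + k <= H -> wk H c h (nseq k true ++ w) = wk H c (h + k) w.
Proof.
elim: k h => [|k IH] h hk; first by rewrite addn0.
rewrite /= IH; last by lia.
rewrite addSnnS (_ : h < H) //; lia.
Qed.

Lemma wk_downs H h k : wk H 0 h (nseq k false) = (h == k).
Proof. by elim: k h => [|k IH] [|h] //=; rewrite IH. Qed.

Lemma wk_cat_downs H h k w : wk H 0 h (w ++ nseq k false) = wk H k h w.
Proof. by elim: w h => [|b w IH] h /=; [rewrite wk_downs | case: b; rewrite IH]. Qed.

Lemma wk_lb H c h s : wk H c h s -> c <= h + size s.
Proof.
elim: s h => [|b s IH] h /=; first by move/eqP ->; rewrite addn0.
case: b => /andP [h1 /IH]; lia.
Qed.

Definition W H c h n := #|[pred t : n.-tuple bool | wk H c h t]|.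

Lemma W0 H c h : W H c h 0 = (h == c).
Proof.
rewrite /W (@card_list _ _ (if h == c then [:: [::]] else [::])).
- by case: (h == c).
- by case: (h == c).
- by move=> [|b s] /=; case: (h == c).
Qed.

Lemma WS H c h n : W H c h n.+1 =
  ((if h < H then W H c h.+1 n else 0) + (if 0 < h then W H c h.-1 n else 0))%N.
Proof.
rewrite /W card_tupleS /=; congr (_ + _)%N.
- case: (h < H); first by apply: eq_card.
  by apply: eq_card0.
- case: (0 < h); first by apply: eq_card.
  by apply: eq_card0.
Qed.

Lemma Wlow H c h n : h + n < c -> W H c h n = 0.
Proof.
move=> hn; apply: eq_card0 => t; rewrite !inE; apply/negbTE/negP => /wk_lb.
rewrite size_tuple; lia.
Qed.

Definition V H c h d := W H c h (c + d.*2 - h).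

Lemma Vrec H c h d : V H c h d =
  (((h == c) && (d == 0)) + (if h < H then V H c h.+1 d else 0)
   + (if (0 < h) && (0 < d) then V H c h.-1 d.-1 else 0))%N.
Proof.
rewrite /V -!mul2n.
case E: (c + 2 * d - h)%N => [|n].
- rewrite W0.
  have -> : (c + 2 * d - h.+1 = 0)%N by lia.
  rewrite W0 (_ : (h.+1 == c) = false); last by apply/eqP; lia.
  case: (h < H); rewrite ?addn0;
  (case: (ltnP 0 h) => h0; case: (ltnP 0 d) => d0 /=; rewrite ?addn0;
   [ rewrite (_ : (c + 2 * d.-1 - h.-1 = 0)%N); last lia;
     rewrite W0 (_ : (h.-1 == c) = false); last (apply/eqP; lia) | | | ];
   (case: (eqVneq h c) => hc /=; [ (have -> : d == 0 by apply/eqP; lia) | ]; by [])).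
- rewrite WS (_ : (h == c) && (d == 0) = false); last by apply/negbTE/andP; lia.
  rewrite add0n.
  have -> : (c + 2 * d - h.+1 = n)%N by lia.
  congr (_ + _)%N.
  case: (ltnP 0 h) => h0; case: (ltnP 0 d) => d0 //=.
  + by rewrite (_ : (c + 2 * d.-1 - h.-1 = n)%N) //; lia.
  + by apply: Wlow; lia.
Qed.

Lemma Dm_V m a b u : 1 <= m -> a + b <= m - 1 ->
  Dm m a b u = V (m - 1) (m - 1 - b) a u.
Proof.
move=> m1 ab; rewrite /Dm /V /W.
set H := (m - 1)%N; set c := (H - b)%N.
have ac : a <= c by rewrite /c /H; lia.
have cH : c <= H by rewrite /c; lia.
apply: (@card_bij _ _ _ _ (fun s => take (size s - a - c) (drop a s))
                          (fun w => nseq a true ++ w ++ nseq c false)).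
- move=> s ss; rewrite /in_Dm => /and4P [dy ht /eqP tk /eqP dr].
  have dec : s = nseq a true ++ take (size s - a - c) (drop a s) ++ nseq c false.
    rewrite -tk -dr -[in LHS](cat_take_drop a s); congr (_ ++ _).
    rewrite -[in LHS](cat_take_drop (size s - a - c) (drop a s)); congr (_ ++ _).
    by rewrite drop_drop; congr drop; rewrite ss -!mul2n; lia.
  split.
  + rewrite size_takel; first by rewrite ss -!mul2n; lia.
    by rewrite size_drop ss -!mul2n; lia.
  + have := wk_dyck H 0 s (leq0n H).
    rewrite /is_dyck /height in dy ht; rewrite dy ht => /esym.
    rewrite {1}dec wk_ups; last by lia.
    by rewrite add0n wk_cat_downs.
  + by rewrite -dec.
- move=> w sw wkw.
  have sg : size (nseq a true ++ w ++ nseq c false) = (c + u).*2.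
    by rewrite !size_cat !size_nseq sw -!mul2n; lia.
  split => //.
  + rewrite /in_Dm; apply/and4P; split.
    * have := wk_dyck H 0 (nseq a true ++ w ++ nseq c false) (leq0n H).
      rewrite wk_ups ?add0n ?wk_cat_downs //; last by lia.
      by rewrite wkw => /andP [].
    * have := wk_dyck H 0 (nseq a true ++ w ++ nseq c false) (leq0n H).
      rewrite wk_ups ?add0n ?wk_cat_downs //; last by lia.
      by rewrite wkw => /andP [].
    * by rewrite take_size_cat ?size_nseq.
    * rewrite catA drop_size_cat //.
      by rewrite !size_cat !size_nseq sw -!mul2n /c /H; lia.
  + rewrite drop_size_cat ?size_nseq // take_size_cat //.
    by rewrite sg sw -!mul2n; lia.
Qed.

Local Open Scope ring_scope.

Lemma T1 (f : nat -> int) N (b : bool) :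
  \sum_(k < N.+1) f k * Posz ((b && (N - k == 0)%N) : nat) = if b then f N else 0.
Proof.
rewrite big_ord_recr /= subnn eqxx andbT big1 ?add0r.
  by case: b; rewrite ?mulr1 ?mulr0.
move=> i _; rewrite (_ : (N - i == 0)%N = false) ?andbF ?mulr0 //.
by apply/negbTE; rewrite -lt0n subn_gt0.
Qed.

Lemma T2 (f : nat -> int) (g : nat -> nat) N (b : bool) :
  \sum_(k < N.+1) f k * Posz (if b then g k else 0%N)
  = if b then \sum_(k < N.+1) f k * Posz (g k) else 0.
Proof. by case: b => //; rewrite big1 // => i _; rewrite mulr0. Qed.

Lemma T3 (f : nat -> int) (g : nat -> nat) N (b : bool) :
  \sum_(k < N.+1) f k * Posz (if b && (0 < N - k)%N then g (N - k)%N.-1 else 0%N)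
  = if b then (if N == 0%N then 0 else \sum_(k < N) f k * Posz (g (N.-1 - k)%N))
    else 0.
Proof.
case: b => /=; last by rewrite big1 // => i _; rewrite mulr0.
case: N => [|N]; first by rewrite big_ord1 /= mulr0.
rewrite big_ord_recr /= subnn /= mulr0 addr0.
apply: eq_bigr => i _.
have -> : (0 < N.+1 - i)%N by rewrite subn_gt0.
by rewrite /= (_ : (N.+1 - i).-1 = N - i)%N //; have := ltn_ord i; lia.
Qed.

Lemma E3lem H c N h :
  (forall m, (m < N)%N -> forall h, (h <= H)%N ->
    \sum_(k < m.+1) (pr H.+1)`_k * Posz (V H c h (m - k)%N) = (Fh H c h)`_m) ->
  (h <= H)%N ->
  (if (0 < h)%N then (if N == 0%N then 0
        else \sum_(k < N) (pr H.+1)`_k * Posz (V H c h.-1 (N.-1 - k)%N)) else 0)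
     = (if (0 < h)%N then 'X * Fh H c h.-1 else 0)`_N.
Proof.
move=> IHN hH.
case: (0 < h)%N; rewrite ?coef0 // coefXM; case: N IHN => [|N] IHN //.
rewrite IHN //; lia.
Qed.

Lemma conv_V H c : (c <= H)%N -> forall N h, (h <= H)%N ->
  \sum_(k < N.+1) (pr H.+1)`_k * Posz (V H c h (N - k)%N) = (Fh H c h)`_N.
Proof.
move=> cH; elim/ltn_ind => N IHN.
suff: forall j h, (H - h)%N = j -> (h <= H)%N ->
  \sum_(k < N.+1) (pr H.+1)`_k * Posz (V H c h (N - k)%N) = (Fh H c h)`_N.
  by move=> S h hH; apply: (S _ h erefl hH).
elim=> [|j IHj] h Ej hH.
all: rewrite Fh_rec' // !coefD.
all: under eq_bigr => k _ do rewrite Vrec !PoszD !mulrDr.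
all: rewrite !big_split T1 (T2 _ (fun k => V H c h.+1 (N - k)%N)) T3.
all: rewrite (@E3lem H c N h IHN hH).
- have -> : (h < H)%N = false by lia.
  rewrite coef0; congr (_ + _ + _) => //.
  by case: (h == c); rewrite ?coef0.
- have hH' : (h < H)%N by lia.
  rewrite hH' IHj //; last by lia.
  congr (_ + _ + _) => //.
  by case: (h == c); rewrite ?coef0.
Qed.

Lemma Dm_series m a b : (1 <= m)%N -> (a + b <= m - 1)%N -> forall N,
  \sum_(k < N.+1) (pr m)`_k * Posz (Dm m a b (N - k)%N) = (pr a * pr b)`_N.
Proof.
move=> m1 ab N.
under eq_bigr => k _ do rewrite Dm_V //.
have -> : m = (m - 1).+1 by lia.
rewrite (_ : (m - 1).+1 - 1 = m - 1)%N; last by lia.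
rewrite conv_V; [|lia|lia].
rewrite /Fh.
have -> : (a - (m - 1 - b) = 0)%N by lia.
have -> : minn a (m - 1 - b) = a by lia.
have -> : maxn a (m - 1 - b) = (m - 1 - b)%N by lia.
have -> : (m - 1 - (m - 1 - b) = b)%N by lia.
by rewrite expr0 mul1r.
Qed.

Definition eqm (R : nat) (p q : {poly int}) := forall i, (i < R)%N -> p`_i = q`_i.

Lemma eqmM R p p' q q' : eqm R p p' -> eqm R q q' -> eqm R (p * q) (p' * q').
Proof.
move=> hp hq i iR; rewrite !coefM; apply: eq_bigr => j _.
have := ltn_ord j => jl.
rewrite hp ?hq //; lia.
Qed.

Definition Gp m a b R : {poly int} := \poly_(u < R) Posz (Dm m a b u).

Lemma G_eqm m a b R : (1 <= m)%N -> (a + b <= m - 1)%N ->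
  eqm R (pr m * Gp m a b R) (pr a * pr b).
Proof.
move=> m1 ab i iR; rewrite coefM -(@Dm_series m a b m1 ab); apply: eq_bigr => k _.
by rewrite coef_poly (_ : (i - k < R)%N) //; lia.
Qed.

Lemma prod_eqm m (ab : seq (nat * nat)) R : (1 <= m)%N ->
  all (fun p => p.1 + p.2 <= m - 1)%N ab ->
  eqm R (pr m ^+ size ab * \prod_(p <- ab) Gp m p.1 p.2 R)
        (\prod_(p <- ab) (pr p.1 * pr p.2)).
Proof.
move=> m1; elim: ab => [|p ab IH] /=.
  by move=> _ i _; rewrite !big_nil mulr1.
move=> /andP [hp hab]; rewrite !big_cons exprS.
rewrite (_ : pr m * pr m ^+ size ab * (Gp m p.1 p.2 R * \prod_(j <- ab) Gp m j.1 j.2 R)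
  = (pr m * Gp m p.1 p.2 R) * (pr m ^+ size ab * \prod_(j <- ab) Gp m j.1 j.2 R)); last by ring.
apply: eqmM; [exact: G_eqm | exact: IH].
Qed.

Lemma series_eqm (P Q G : {poly int}) r : Q`_0 = 1 -> eqm r.+1 (Q * G) P -> series_coef P Q r = G`_r.
Proof.
move=> Q0 hQG; rewrite /series_coef.
set S := \sum_(j < r.+1) (1 - Q) ^+ j.
have QS : Q * S = 1 - (1 - Q) ^+ r.+1.
  have h := subrX1 (1 - Q) r.+1; rewrite -/S in h.
  have -> : Q * S = - ((1 - Q - 1) * S) by ring.
  by rewrite -h; ring.
have hX : 1 - Q = drop_poly 1 (1 - Q) * 'X^1.
  rewrite -{1}(poly_take_drop 1 (1 - Q)).
  suff -> : take_poly 1 (1 - Q) = 0 by rewrite add0r.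
  apply/polyP => i; rewrite coef_take_poly coef0.
  case: i => [|i] //=; by rewrite coefB Q0 coef1 subrr.
have e1 : eqm r.+1 (P * S) (Q * G * S).
  by apply: eqmM => i hi; rewrite ?hQG.
rewrite e1 // (_ : Q * G * S = G - 'X^(r.+1) * (G * drop_poly 1 (1 - Q) ^+ r.+1)).
  by rewrite coefB coefXnM ltnSn subr0.
set d := drop_poly 1 (1 - Q) in hX *.
have -> : Q * G * S = (Q * S) * G by ring.
rewrite QS hX exprMn -exprM mul1n. ring.
Qed.

Lemma prod_scaleX n (c : 'I_n -> int) (k : 'I_n -> nat) :
  \prod_(i < n) (c i *: 'X^(k i)) = (\prod_(i < n) c i) *: ('X^(\sum_(i < n) k i) : {poly int}).
Proof.
under eq_bigr => i _ do rewrite -mul_polyC.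
by rewrite big_split /= prodrXr -rmorph_prod mul_polyC.
Qed.

Lemma coef_prodG m (ab : seq (nat * nat)) r :
  (\prod_(p <- ab) Gp m p.1 p.2 r.+1)`_r = Posz (tuple_count m ab r).
Proof.
rewrite (big_nth (0%N, 0%N)) big_mkord.
under eq_bigr => i _ do rewrite /Gp poly_def.
rewrite bigA_distr_bigA /=.
under eq_bigr => f _ do rewrite prod_scaleX.
rewrite coef_sumMXn /tuple_count -natz natr_sum.
apply: eq_big => [f|f _] /=; first by [].
rewrite natr_prod; apply: eq_bigr => i _; by rewrite natz.
Qed.

Lemma core m (ab : seq (nat * nat)) j (P : {poly int}) r : (1 <= m)%N ->
  all (fun p => p.1 + p.2 <= m - 1)%N ab ->
  P = (\prod_(p <- ab) (pr p.1 * pr p.2)) * pr m ^+ j ->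
  series_coef P (pr m ^+ (size ab + j)) r = (\prod_(p <- ab) Gp m p.1 p.2 r.+1)`_r.
Proof.
move=> m1 hab ->; apply: series_eqm.
  elim: (size ab + j)%N => [|n IH]; first by rewrite expr0 coef1.
  by rewrite exprS coef0M IH pr_coef0 mulr1.
rewrite exprD (mulrC (pr m ^+ size ab)) -mulrA.
rewrite (mulrC (\prod_(p <- ab) (pr p.1 * pr p.2))).
apply: eqmM; first by move=> i _.
exact: prod_eqm.
Qed.

Lemma pxi_split m (xi : seq nat) : all (fun x => x <= m)%N xi ->
  \prod_(x <- xi) pr x = (\prod_(x <- xi | (x < m)%N) pr x) * pr m ^+ count_mem m xi.
Proof.
elim: xi => [|x xi IH] /=; first by rewrite !big_nil mulr1.
move=> /andP [xm /IH {}IH]; rewrite !big_cons IH.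
case: (eqVneq x m) => [->|hne].
- by rewrite ltnn /= exprS; ring.
- have h : (x < m)%N by rewrite ltn_neqAle hne xm.
  by rewrite h /= mulrA.
Qed.

Lemma prod_nseq (T : Type) (F : T -> {poly int}) n (a : T) : \prod_(x <- nseq n a) F x = F a ^+ n.
Proof. by elim: n => [|n IH]; rewrite ?big_nil ?expr0 // /= big_cons IH exprS. Qed.

Lemma fam m (ab : seq (nat * nat)) j mu (P : {poly int}) N : (1 <= m)%N ->
  all (fun p => p.1 + p.2 <= m - 1)%N ab -> (mu %/ m).+1 = (size ab + j)%N ->
  pr (m - mu %% m - 1) * P = \prod_(p <- ab) (pr p.1 * pr p.2) * pr m ^+ j ->
  series_coef (pr (m - mu %% m - 1) * P) (pr m ^+ (mu %/ m).+1) N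
  = (\prod_(p <- ab) Gp m p.1 p.2 N.+1)`_N.
Proof. by move=> m1 hab -> hP; apply: core. Qed.

Lemma divmodm a m rho : (rho < m)%N -> ((a * m + rho) %/ m = a)%N /\ ((a * m + rho) %% m = rho)%N.
Proof.
move=> rm; have m0 : (0 < m)%N by lia.
split; first by rewrite divnMDl // divn_small // addn0.
by rewrite modnMDl modn_small.
Qed.

Lemma pr1 : pr 1 = 1. Proof. by []. Qed.
Lemma pr0 : pr 0 = 1. Proof. by []. Qed.

Theorem theorem1p3 :
  (* main statement *)
  (forall (m : nat) (xi : seq nat) (mu : nat) (ab : seq (nat * nat)),
     (1 <= m)%N ->
     partition_le m xi ->
     (* t = #{i : xi_i = m},  k = mu1 + 1 - t >= 0 *)
     (count_mem m xi <= (mu %/ m).+1)%N ->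
     size ab = ((mu %/ m).+1 - count_mem m xi)%N ->
     all (fun p => (p.1 + p.2 <= m - 1)%N) ab ->
     pr (m - mu %% m - 1) * \prod_(x <- xi | (x < m)%N) pr x
       = \prod_(p <- ab) (pr p.1 * pr p.2) ->
     forall r : nat, Fcoef m xi mu r = (tuple_count m ab r)%:Z)
  /\
  (* (a) xi = (m^t, 1^s), mu = |xi| *)
  (forall (m t s q rho : nat),
     (1 <= m)%N -> (rho < m)%N -> s = (q * m + rho)%N ->
     let xi := nseq t m ++ nseq s 1%N in
     forall N : nat,
       Fcoef m xi (sumn xi) N
       = (tuple_count m ((0%N, (m - rho - 1)%N) :: nseq q (0%N, 0%N)) N)%:Z)
  /\
  (* (b) xi = (m^t, r, 1^s), 1 <= r <= m-1, mu = |xi| *)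
  (forall (m t r s q rho : nat),
     (1 <= r)%N -> (r <= m - 1)%N -> (rho < m)%N -> (r + s = q * m + rho)%N ->
     let xi := nseq t m ++ r :: nseq s 1%N in
     (q = 0%N -> forall u : nat,
        Fcoef m xi (sumn xi) u = (Dm m r (m - r - s - 1) u)%:Z) /\
     ((1 <= q)%N -> forall N : nat,
        Fcoef m xi (sumn xi) N
        = (tuple_count m ((0%N, (m - rho - 1)%N) :: (r, 0%N)
                            :: nseq (q - 1) (0%N, 0%N)) N)%:Z))
  /\
  (* (c) xi = (m^t, r_1, ..., r_d, 1^s), 1 <= r_i <= m-1, mu = |xi| *)
  (forall (m t s q rho : nat) (rs : seq nat),
     all (fun x => (1 <= x <= m - 1)%N) rs -> sorted geq rs ->
     (rho < m)%N -> (sumn rs + s = q * m + rho)%N ->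
     let xi := nseq t m ++ rs ++ nseq s 1%N in
     (size rs <= q)%N -> forall N : nat,
       Fcoef m xi (sumn xi) N
       = (tuple_count m ((0%N, (m - rho - 1)%N)
                          :: [seq (x, 0%N) | x <- rs]
                          ++ nseq (q - size rs) (0%N, 0%N)) N)%:Z).
Proof.
split; [|split; [|split]].
- move=> m xi mu ab m1 /and3P [_ hall _] tle sab hab hprod r.
  rewrite /Fcoef -coef_prodG.
  apply: (@fam m ab (count_mem m xi)) => //; first by lia.
  by rewrite /pxi (@pxi_split m xi hall) mulrA hprod.
- move=> m t s q rho m1 rm -> xi N; rewrite /Fcoef -coef_prodG.
  have hs : sumn xi = ((t + q) * m + rho)%N.
    rewrite /xi sumn_cat !sumn_nseq; lia.
  have [hd hm] := @divmodm (t + q) m rho rm.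
  rewrite hs; apply: (@fam m _ t) => //.
  + rewrite /= all_nseq /=; apply/andP; split; [lia | apply/orP; right; lia].
  + by rewrite hd /= size_nseq; lia.
  + rewrite hm /pxi /xi big_cat /= !(@prod_nseq nat pr) big_cons (@prod_nseq (nat * nat) (fun p => pr p.1 * pr p.2)) pr0 pr1 /=.
    by rewrite mulr1 !expr1n; ring.
- move=> m t r s q rho r1 rm rhom hq xi; split.
  + move=> q0 u; rewrite /Fcoef.
    have m1 : (1 <= m)%N by lia.
    have hs : sumn xi = (t * m + rho)%N.
      rewrite /xi sumn_cat sumn_nseq /= sumn_nseq; rewrite q0 in hq; lia.
    have [hd hm] := @divmodm t m rho rhom.
    rewrite hs (@fam m [:: (r, (m - r - s - 1)%N)] t) //.
    * by rewrite big_cons big_nil mulr1 coef_poly ltnSn.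
    * by rewrite /= andbT; lia.
    * by rewrite hd /=; lia.
    * rewrite hm /pxi /xi big_cat /= !prod_nseq big_cons prod_nseq pr1 expr1n big_cons big_nil.
      have -> : (m - rho - 1 = m - r - s - 1)%N by rewrite q0 in hq; lia.
      ring.
  + move=> q1 N; rewrite /Fcoef -coef_prodG.
    have m1 : (1 <= m)%N by lia.
    have hs : sumn xi = ((t + q) * m + rho)%N.
      rewrite /xi sumn_cat sumn_nseq /= sumn_nseq; lia.
    have [hd hm] := @divmodm (t + q) m rho rhom.
    rewrite hs; apply: (@fam m _ t) => //.
    * by rewrite /= all_nseq /= orbT !andbT; lia.
    * by rewrite hd /= size_nseq; lia.
    * rewrite hm /pxi /xi big_cat /= !prod_nseq big_cons prod_nseq !big_cons prod_nseq pr0 pr1.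
      rewrite /= !mulr1 !expr1n. ring.
- move=> m t s q rho rs hrs _ rhom hq xi hd0 N; rewrite /Fcoef -coef_prodG.
  have m1 : (1 <= m)%N by lia.
  have hs : sumn xi = ((t + q) * m + rho)%N.
    rewrite /xi !sumn_cat !sumn_nseq; lia.
  have [hd hm] := @divmodm (t + q) m rho rhom.
  rewrite hs; apply: (@fam m _ t) => //.
  + rewrite /= all_cat all_map all_nseq /= orbT !andbT; apply/andP; split; first by lia.
    by apply: sub_all hrs => x /andP [_ h] /=; rewrite addn0.
  + by rewrite hd /= size_cat size_map size_nseq; lia.
  + rewrite hm /pxi /xi !big_cat /= !(@prod_nseq nat pr) big_cons big_cat big_map (@prod_nseq (nat * nat) (fun p => pr p.1 * pr p.2)) /=.
    under [in RHS]eq_bigr => x _ do rewrite mulr1.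
    rewrite !mulr1 !expr1n !mulr1. ring.
Qed.
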